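(* Let $Q\colon\mathbb{R}^p\to\mathbb{R}$ be a polynomial and let $P_1$ be a program on the dictionary $\mathcal{D}_1=\{+,\times,\mathrm{ReLU},+c,\times c\}$ such that $[P_1](x)=Q(x)$ for all $x$ in a nonempty open set $S\subset\mathbb{R}^p$. Then there is a program $P_2$ on the dictionary $\mathcal{D}=\{+,\times,+c,\times c\}$ such that $[P_2]=Q$ on all of $\mathbb{R}^p$. Furthermore, if $\mathrm{cost}(\mathrm{ReLU})=\mathrm{cost}(\times c)$, then $\mathrm{cost}(P_2)=\mathrm{cost}(P_1)$.
   Context: A program on a dictionary with $p$ inputs computes $x_i=g_i((x_j)_{j\in\mathrm{pr}(i)})$, $i=p+1,\dots,m$, with $g_i$ in the dictionary applied to earlier values ($j<i$), returning $x_m$; $[P]$ denotes the computed function and $\mathrm{cost}(P)=\sum_i\mathrm{cost}(g_i)$. $+c$ and $\times c$ denote addition and multiplication by a fixed real constant; $\mathrm{ReLU}(t)=\max(0,t)$. *)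

(* Defs.v *)
From HB Require Import structures.
From mathcomp Require Import all_boot all_order all_algebra.
From mathcomp Require Import Rstruct.
From mathcomp Require Import mpoly.
From Stdlib Require Import Rdefinitions.
Set Implicit Arguments. Unset Strict Implicit. Unset Printing Implicit Defensive.
Import Order.TTheory GRing.Theory Num.Theory.
Local Open Scope ring_scope.

(* Gates of the dictionary D1 = {+, *, ReLU, +c, *c}.  Arguments are indices
   (0-based) of earlier values x_0, ..., x_{k-1} (inputs are x_0..x_{p-1}). *)
Inductive gate : Type :=
  | GAdd  of nat & nat
  | GMul  of nat & nat
  | GReLU of nat
  | GAddc of R & nat
  | GMulc of R & nat.

Inductive gate_kind : Type := KAdd | KMul | KReLU | KAddc | KMulc.

Definition kind (g : gate) : gate_kind :=
  match g with
  | GAdd _ _ => KAdd | GMul _ _ => KMul | GReLU _ => KReLU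
  | GAddc _ _ => KAddc | GMulc _ _ => KMulc
  end.

Definition ReLU (t : R) : R := Num.max 0 t.

Definition program := seq gate.

Definition gate_wf (k : nat) (g : gate) : bool :=
  match g with
  | GAdd i j | GMul i j => (i < k)%nat && (j < k)%nat
  | GReLU i | GAddc _ i | GMulc _ i => (i < k)%nat
  end.

Fixpoint prog_wf_from (k : nat) (P : program) : bool :=
  match P with
  | [::] => true
  | g :: P' => gate_wf k g && prog_wf_from k.+1 P'
  end.

Definition prog_wf (p : nat) (P : program) : bool := prog_wf_from p P.

Definition no_relu (P : program) : bool := all (fun g => if kind g is KReLU then false else true) P.

Definition eval_gate (vals : seq R) (g : gate) : R :=
  match g with
  | GAdd i j => nth 0 vals i + nth 0 vals j
  | GMul i j => nth 0 vals i * nth 0 vals j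
  | GReLU i => ReLU (nth 0 vals i)
  | GAddc c i => nth 0 vals i + c
  | GMulc c i => c * nth 0 vals i
  end.

Fixpoint run (vals : seq R) (P : program) : seq R :=
  match P with
  | [::] => vals
  | g :: P' => run (rcons vals (eval_gate vals g)) P'
  end.

Definition prog_fun (p : nat) (P : program) (x : 'I_p -> R) : R :=
  last 0 (run [seq x i | i <- enum 'I_p] P).

Definition prog_cost (cost : gate_kind -> R) (P : program) : R :=
  \sum_(g <- P) cost (kind g).

Definition is_open (p : nat) (S : ('I_p -> R) -> Prop) : Prop :=
  forall x, S x -> exists2 e : R, 0 < e &
    forall y : 'I_p -> R, (forall i, `|y i - x i| < e) -> S y.

(* Main.v *)
Require Import Defs.
From HB Require Import structures.
From mathcomp Require Import all_boot all_order all_algebra.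
From mathcomp Require Import Rstruct.
From mathcomp Require Import mpoly.
From Stdlib Require Import Rdefinitions.
From mathcomp Require Import ring lra.
From Stdlib Require Import Classical FunctionalExtensionality.
Import Order.TTheory GRing.Theory Num.Theory.
Local Open Scope ring_scope.
Set Implicit Arguments. Unset Strict Implicit. Unset Printing Implicit Defensive.

Section Good.
Variable p : nat.
Notation vec := ('I_p -> R).

Definition cont (f : vec -> R) := forall x (e : R), 0 < e -> exists2 d : R, 0 < d &
  forall y : vec, (forall i, `|y i - x i| < d) -> `|f y - f x| < e.
Definition PF (f : vec -> R) := forall a x : vec, exists q : {poly R},
  forall t, f (fun i => a i + t * (x i - a i)) = q.[t].
Definition good f := cont f /\ PF f.

Lemma good_ext f g : good f -> f =1 g -> good g.
Proof.
move=> [cf pf] E; split.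
  move=> x e e0; have [d d0 H] := cf x e e0; exists d => // y Hy.
  by rewrite -!E; apply: H.
move=> a x; have [q Hq] := pf a x; exists q => t; by rewrite -E.
Qed.

Lemma good_cst c : good (fun _ => c).
Proof.
split.
  move=> x e e0; exists 1 => // y _; by rewrite subrr normr0.
by move=> a x; exists c%:P => t; rewrite hornerC.
Qed.

Lemma good_proj i : good (fun x => x i).
Proof.
split.
  move=> x e e0; exists e => // y; exact.
move=> a x; exists ((a i)%:P + (x i - a i)%:P * 'X) => t.
by rewrite hornerD hornerM hornerX !hornerC mulrC.
Qed.

Lemma good_add f g : good f -> good g -> good (fun x => f x + g x).
Proof.
move=> [cf pf] [cg pg]; split.
  move=> x e e0.
  have [d1 d10 H1] := cf x (e/2) ltac:(lra).
  have [d2 d20 H2] := cg x (e/2) ltac:(lra).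
  exists (Num.min d1 d2); first by rewrite lt_min d10 d20.
  move=> y Hy.
  have Hy1 : forall i, `|y i - x i| < d1 by move=> i; have := Hy i; rewrite lt_min => /andP[].
  have Hy2 : forall i, `|y i - x i| < d2 by move=> i; have := Hy i; rewrite lt_min => /andP[].
  have := H1 y Hy1; have := H2 y Hy2.
  have -> : f y + g y - (f x + g x) = (f y - f x) + (g y - g x) by ring.
  have := ler_normD (f y - f x) (g y - g x); lra.
move=> a x; have [q1 E1] := pf a x; have [q2 E2] := pg a x.
by exists (q1 + q2) => t; rewrite hornerD E1 E2.
Qed.

Lemma good_mul f g : good f -> good g -> good (fun x => f x * g x).
Proof.
move=> [cf pf] [cg pg]; split.
  move=> x e e0.
  set F := `|f x|; set G := `|g x|.
  have F0 : 0 <= F by apply: normr_ge0.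
  have G0 : 0 <= G by apply: normr_ge0.
  set a := Num.min 1 (e / (2 * (G + 1))).
  set b := e / (2 * (F + 1)).
  have hb : b * (2 * (F + 1)) = e by rewrite /b; field; lra.
  have hb0 : 0 < b by rewrite /b; apply: divr_gt0 => //; lra.
  have ha1 : a <= 1 by rewrite /a ge_min lexx.
  have ha2 : a * (2 * (G + 1)) <= e.
    have : a <= e / (2 * (G + 1)) by rewrite /a ge_min lexx orbT.
    move=> h; have : e / (2 * (G + 1)) * (2 * (G + 1)) = e by field; lra.
    nra.
  have ha0 : 0 < a by rewrite /a lt_min ltr01 /=; apply: divr_gt0 => //; lra.
  have [d1 d10 H1] := cf x a ha0.
  have [d2 d20 H2] := cg x b hb0.
  exists (Num.min d1 d2); first by rewrite lt_min d10 d20.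
  move=> y Hy.
  have Hy1 : forall i, `|y i - x i| < d1 by move=> i; have := Hy i; rewrite lt_min => /andP[].
  have Hy2 : forall i, `|y i - x i| < d2 by move=> i; have := Hy i; rewrite lt_min => /andP[].
  have hu := H1 y Hy1; have hv := H2 y Hy2.
  have -> : f y * g y - f x * g x = f y * (g y - g x) + (f y - f x) * g x by ring.
  have h1 := ler_normD (f y * (g y - g x)) ((f y - f x) * g x).
  rewrite !normrM in h1.
  have hfy : `|f y| <= F + `|f y - f x|.
    by have := ler_normD (f x) (f y - f x); rewrite [f x + _]addrC subrK.
  set u := `|f y - f x| in hu hfy h1 *; set v := `|g y - g x| in hv h1 *.
  have u0 : 0 <= u by apply: normr_ge0.
  have v0 : 0 <= v by apply: normr_ge0.
  have fy0 : 0 <= `|f y| by apply: normr_ge0.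
  rewrite -/G in h1.
  nra.
move=> a x; have [q1 E1] := pf a x; have [q2 E2] := pg a x.
by exists (q1 * q2) => t; rewrite hornerM E1 E2.
Qed.

End Good.

Lemma PF_vanish p (h : ('I_p -> R) -> R) (U : ('I_p -> R) -> Prop) a0 :
  PF h -> is_open U -> U a0 -> (forall x, U x -> h x = 0) -> forall x, h x = 0.
Proof.
move=> ph oU Ua0 hU x.
have [e e0 He] := oU a0 Ua0.
have [q Hq] := ph a0 x.
set S := \sum_i `|x i - a0 i|.
have S0 : 0 <= S by apply: sumr_ge0 => i _; apply: normr_ge0.
have Si : forall i, `|x i - a0 i| <= S.
  move=> i; rewrite /S (bigD1 i) //= lerDl; apply: sumr_ge0 => j _; apply: normr_ge0.
set d := e / (1 + S).
have hd : d * (1 + S) = e by rewrite /d; field; lra.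
have d0 : 0 < d by rewrite /d; apply: divr_gt0 => //; lra.
have root_small : forall t, `|t| <= d -> q.[t] = 0.
  move=> t ht; rewrite -Hq; apply: hU; apply: He => i.
  rewrite addrC addKr normrM.
  have := Si i; have := normr_ge0 t; have := normr_ge0 (x i - a0 i); nra.
have q0 : q = 0.
  apply/eqP; apply/negPn/negP => nq.
  set rs := [seq d / (k.+1)%:R | k <- iota 0 (size q)].
  suff : leq (size rs).+1 (size q) by rewrite /rs size_map size_iota ltnn.
  apply: max_poly_roots nq _ _.
    apply/allP => t /mapP[k _ ->]; apply/eqP; apply: root_small.
    rewrite normrM normfV gtr0_norm // normr_nat.
    rewrite ler_pdivrMr ?ltr0Sn //.
    have : 1 <= (k.+1)%:R :> R by rewrite ler1n.
    nra.
  rewrite map_inj_uniq ?iota_uniq // => k l.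
  move/(congr1 (fun z => z / d)).
  rewrite ![d / _ / d]mulrC !mulKf ?gt_eqF //.
  move/invr_inj/eqP; rewrite eqr_nat eqSS => /eqP //.
have -> : x = (fun i => a0 i + 1 * (x i - a0 i)).
  by apply: functional_extensionality => i; rewrite mul1r addrC subrK.
by rewrite Hq q0 horner0.
Qed.

Lemma PF_sub p (f g : ('I_p -> R) -> R) : PF f -> PF g -> PF (fun x => f x - g x).
Proof.
move=> pf pg a x; have [q1 E1] := pf a x; have [q2 E2] := pg a x.
by exists (q1 - q2) => t; rewrite hornerD hornerN E1 E2.
Qed.

Lemma good_meval p (Q : {mpoly R[p]}) : good (fun x => Q.@[x]).
Proof.
apply: (good_ext (f := fun x => \sum_(m <- msupp Q) Q@_m * \prod_i x i ^+ m i)); last first.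
  by move=> x; rewrite mevalE.
elim: (msupp Q) => [|m s IH].
  by apply: (good_ext (good_cst _ 0)) => x; rewrite big_nil.
apply: (good_ext (f := fun x => Q@_m * \prod_i x i ^+ m i + \sum_(m <- s) Q@_m * \prod_i x i ^+ m i)); last first.
  by move=> x; rewrite big_cons.
apply: good_add => //; apply: good_mul; first exact: good_cst.
elim: (index_enum _) => [|i r IHr].
  by apply: (good_ext (good_cst _ 1)) => x; rewrite big_nil.
apply: (good_ext (f := fun x => x i ^+ m i * \prod_(j <- r) x j ^+ m j)); last first.
  by move=> x; rewrite big_cons.
apply: good_mul => //.
elim: (m i) => [|k IHk].
  by apply: (good_ext (good_cst _ 1)) => x; rewrite expr0.
apply: (good_ext (f := fun x => x i * x i ^+ k)); last by move=> x; rewrite exprS.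
by apply: good_mul => //; apply: good_proj.
Qed.

Definition sim_gate (g g' : gate) : Prop :=
  (g' = g /\ kind g <> KReLU) \/ exists c i, g = GReLU i /\ g' = GMulc c i.

Fixpoint sim (P P' : program) : Prop :=
  match P, P' with
  | [::], [::] => True
  | g :: P, g' :: P' => sim_gate g g' /\ sim P P'
  | _, _ => False
  end.

Lemma sim_wf P P' k : sim P P' -> prog_wf_from k P -> prog_wf_from k P'.
Proof.
elim: P P' k => [|g P IH] [|g' P'] k //= [hg hs] /andP[wg wP].
rewrite (IH _ _ hs wP) andbT.
case: hg wg => [[-> _]|[c [i [-> ->]]]] //.
Qed.

Lemma sim_norelu P P' : sim P P' -> no_relu P'.
Proof.
elim: P P' => [|g P IH] [|g' P'] //= [hg hs]; rewrite (IH _ hs) andbT.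
case: hg => [[-> ]|[c [i [_ ->]]]] //; by case: g.
Qed.

Lemma sim_cost P P' cost : cost KReLU = cost KMulc -> sim P P' ->
  prog_cost cost P' = prog_cost cost P.
Proof.
move=> hc; elim: P P' => [|g P IH] [|g' P'] //= [hg hs].
rewrite /prog_cost !big_cons -/(prog_cost cost P) -/(prog_cost cost P') (IH _ hs).
case: hg => [[-> _]|[c [i [-> ->]]]] //=; by rewrite hc.
Qed.

Lemma size_run vals P : size (run vals P) = addn (size vals) (size P).
Proof.
elim: P vals => [|g P IH] vals /=; first by rewrite addn0 .
by rewrite IH size_rcons addSnnS.
Qed.

Section Main.
Variable p : nat.
Notation vec := ('I_p -> R).

Definition goodV (V : vec -> seq R) :=
  (exists k, forall x, size (V x) = k) /\ forall j, good (fun x => nth 0 (V x) j).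

Lemma goodV_rcons V h : goodV V -> good h -> goodV (fun x => rcons (V x) (h x)).
Proof.
move=> [[k hk] hj] gh; split.
  by exists k.+1 => x; rewrite size_rcons hk.
move=> j; apply: (good_ext (f := fun x => if leq j.+1 k then nth 0 (V x) j
   else if j == k then h x else 0)); last by move=> x; rewrite nth_rcons hk.
case: ltnP => _; first exact: hj.
by case: eqP => _; [exact: gh | exact: good_cst].
Qed.

Lemma good_gate V g : goodV V -> kind g <> KReLU -> good (fun x => eval_gate (V x) g).
Proof.
move=> [_ hj]; case: g => /= [i j|i j|i|c i|c i] // _.
- exact: good_add.
- exact: good_mul.
- by apply: good_add => //; apply: good_cst.
- by apply: good_mul => //; apply: good_cst.
Qed.

Lemma goodV_run P V : no_relu P -> goodV V -> goodV (fun x => run (V x) P).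
Proof.
elim: P V => [|g P IH] V //= /andP[hg hP] gV.
apply: (IH (fun x => rcons (V x) (eval_gate (V x) g))) => //.
apply: goodV_rcons => //; apply: good_gate => //; by case: g hg.
Qed.

Lemma main P : forall (U : vec -> Prop) (V : vec -> seq R),
  is_open U -> (exists x, U x) -> goodV V ->
  exists P', sim P P' /\ exists U' : vec -> Prop,
    [/\ is_open U', (exists x, U' x), (forall x, U' x -> U x) &
        forall x, U' x -> run (V x) P = run (V x) P'].
Proof.
elim: P => [|g P IH] U V oU neU gV.
  by exists [::]; split => //; exists U.
have [c [i [[Hg Hr]|Hk]]] : exists (c : R) (i : nat), (g = GReLU i /\
     ((exists x0, U x0 /\ 0 < nth 0 (V x0) i) /\ c = 1 \/
      (forall x, U x -> nth 0 (V x) i <= 0) /\ c = 0)) \/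
   kind g <> KReLU.
  case: g => [i j|i j|i|c0 i|c0 i]; try by exists 0, 0%N; right.
  case: (classic (exists x0, U x0 /\ 0 < nth 0 (V x0) i)) => H.
    by exists 1, i; left; split => //; left.
  exists 0, i; left; split => //; right; split => // x Ux.
  by rewrite leNgt; apply/negP => h; apply: H; exists x.
2: { have gV' := goodV_rcons gV (good_gate gV Hk).
  have [P' [hs [U' [oU' neU' sU' hU']]]] := IH U _ oU neU gV'.
  exists (g :: P'); split; first by split => //; left.
  by exists U'; split => // x Ux /=; rewrite hU'. }
have gV' := goodV_rcons gV (good_gate (g := GMulc c i) gV ltac:(by [])).
set f := fun x => nth 0 (V x) i.
case: Hr => [[[x0 [Ux0 fx0]] Ec]|[Hn Ec]]; subst c.
- have oU1 : is_open (fun y => U y /\ 0 < f y).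
    move=> y [Uy fy].
    have [e1 e10 H1] := oU y Uy.
    have [d d0 Hd] := (proj1 (proj2 gV i)) y (f y) fy.
    exists (Num.min e1 d); first by rewrite lt_min e10 d0.
    move=> z Hz; split.
      by apply: H1 => j; have := Hz j; rewrite lt_min => /andP[].
    have := Hd z (fun j => ltac:(have := Hz j; rewrite lt_min => /andP[] //)).
    rewrite ltr_norml => /andP[h _]; move: fy h; rewrite /f /=; lra.
  have [P' [hs [U' [oU' neU' sU' hU']]]] := IH _ _ oU1 (ex_intro _ x0 (conj Ux0 fx0)) gV'.
  exists (GMulc 1 i :: P'); split; first by split => //; right; exists 1, i.
  exists U'; split => //; first by move=> x /sU' [].
  move=> x Ux; rewrite Hg /= -hU' //=.
  have [_ fx] := sU' x Ux.
  have E : ReLU (V x)`_i = 1 * (V x)`_i.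
    rewrite /ReLU max_r ?ltW //; ring.
  by rewrite E.
- have [P' [hs [U' [oU' neU' sU' hU']]]] := IH _ _ oU neU gV'.
  exists (GMulc 0 i :: P'); split; first by split => //; right; exists 0, i.
  exists U'; split => //.
  move=> x Ux; rewrite Hg /= -hU' //=.
  have E : ReLU (V x)`_i = 0 * (V x)`_i.
    rewrite /ReLU max_l; first ring. by apply: Hn; apply: sU'.
  by rewrite E.
Qed.

End Main.

Unset Implicit Arguments.
Lemma goodV_inp p : goodV (fun x : 'I_p -> R => [seq x i | i <- enum 'I_p]).
Proof.
split; first by exists p => x; rewrite size_map size_enum_ord.
move=> j; case: (ltnP j p) => hj.
  apply: (good_ext (good_proj (Ordinal hj))) => x.
  rewrite (nth_map (Ordinal hj)) ?size_enum_ord //; congr x; apply: val_inj.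
  by rewrite /= nth_enum_ord.
apply: (good_ext (good_cst _ 0)) => x.
by rewrite nth_default // size_map size_enum_ord.
Qed.

Theorem lemmaC1 (p : nat) (Q : {mpoly R[p]}) (P1 : program)
    (S : ('I_p -> R) -> Prop) :
  prog_wf p P1 ->
  is_open S -> (exists x, S x) ->
  (forall x, S x -> prog_fun P1 x = Q.@[x]) ->
  exists P2 : program,
    [/\ prog_wf p P2, no_relu P2,
        (forall x : 'I_p -> R, prog_fun P2 x = Q.@[x]) &
        (forall cost : gate_kind -> R, cost KReLU = cost KMulc ->
           prog_cost cost P2 = prog_cost cost P1)].
Proof.
move=> wf oS neS hS.
have [P' [hs [U' [oU' [a0 Ua0] sU' hU']]]] := main P1 oS neS (goodV_inp p).
have nr := sim_norelu hs.
exists P'; split.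
- exact: sim_wf hs wf.
- exact: nr.
- move=> x.
  have gP := goodV_run nr (goodV_inp p).
  set h := fun x => prog_fun P' x - Q.@[x].
  have ph : PF h.
    apply: PF_sub; last exact: (proj2 (good_meval Q)).
    move=> a y; have [q Hq] := proj2 (proj2 gP (addn p (size P')).-1) a y.
    exists q => t; rewrite -Hq /prog_fun -nth_last size_run size_map size_enum_ord.
    done.
  have hx : h x = 0.
    apply: (PF_vanish ph oU' Ua0) => y Uy; rewrite /h /prog_fun -hU' //.
    rewrite -/(prog_fun P1 y) hS; first ring.
    exact: sU'.
  move: hx; rewrite /h /=; lra.
- by move=> cost hc; apply: sim_cost.
Qed.
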